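(* Let $G$ be a connected distance-hereditary graph. Then $G$ is twin-free if and only if $G$ is prime.
   Context: All graphs are finite and simple. A graph is distance-hereditary if it has no induced subgraph isomorphic to a hole (an induced cycle of length at least $5$), the house (a $5$-cycle plus one chord), the domino (a $6$-cycle $v_1\dots v_6$ plus the chord $v_1v_4$), or the gem ($P_4$ plus a vertex adjacent to all four of its vertices). Two distinct vertices $u,v$ are twins if $N(u)\setminus\{u,v\}=N(v)\setminus\{u,v\}$; a graph is twin-free if it has no pair of twins. A module of $G=(V,E)$ is a set $M\subseteq V$ such that every $v\in V\setminus M$ is adjacent to all or to none of $M$; it is trivial if $|M|=1$ or $M=V$; $G$ is prime if all its modules are trivial. *)

(* Defs.v *)
(* A finite simple graph: vertex type T : finType with a
   symmetric irreflexive adjacency relation e : rel T. *)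
From mathcomp Require Import all_boot.
Set Implicit Arguments. Unset Strict Implicit. Unset Printing Implicit Defensive.

Section Graphs.
Variable T : finType.
Variable e : rel T.

Definition connected_graph : Prop := forall x y : T, connect e x y.

Definition has_induced (k : nat) (H : rel 'I_k) : Prop :=
  exists f : 'I_k -> T, injective f /\ forall i j, e (f i) (f j) = H i j.

Definition twins (u v : T) : Prop :=
  u != v /\ forall w : T, w != u -> w != v -> e u w = e v w.

Definition twin_free : Prop := forall u v : T, ~ twins u v.

Definition is_module (M : {set T}) : Prop :=
  forall v : T, v \notin M ->
    [forall x in M, e v x] || [forall x in M, ~~ e v x].

Definition trivial_module (M : {set T}) : Prop :=
  #|M| = 1 \/ M = [set: T].

Definition prime_graph : Prop :=
  forall M : {set T}, M != set0 -> is_module M -> trivial_module M.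
End Graphs.

Definition cycle_rel (n : nat) : rel 'I_n :=
  fun i j => (val j == (val i).+1 %% n) || (val i == (val j).+1 %% n).

Definition is_pair (n a b : nat) (i j : 'I_n) : bool :=
  ((val i == a) && (val j == b)) || ((val i == b) && (val j == a)).

Definition house_rel : rel 'I_5 := fun i j => cycle_rel i j || is_pair 0 2 i j.

Definition domino_rel : rel 'I_6 := fun i j => cycle_rel i j || is_pair 0 3 i j.

Definition gem_rel : rel 'I_5 := fun i j =>
  [|| is_pair 0 1 i j, is_pair 1 2 i j, is_pair 2 3 i j,
      is_pair 0 4 i j, is_pair 1 4 i j, is_pair 2 4 i j | is_pair 3 4 i j].

Definition distance_hereditary (T : finType) (e : rel T) : Prop :=
  (forall n, 5 <= n -> ~ has_induced e (@cycle_rel n)) /\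
  ~ has_induced e house_rel /\ ~ has_induced e domino_rel /\
  ~ has_induced e gem_rel.

(* Main.v *)
Require Import Defs.
From mathcomp Require Import all_boot.
From Stdlib Require Import Classical.
Set Implicit Arguments. Unset Strict Implicit. Unset Printing Implicit Defensive.

Section Aux.
Variable T : finType.

Lemma ex_min_card (P : {set T} -> Prop) A :
  P A -> exists B, P B /\ forall C, P C -> #|B| <= #|C|.
Proof.
move: {2}#|A| (leqnn #|A|) => n; elim: n A => [|n IH] A HA PA.
  exists A; split => // C _; by move: HA; rewrite leqn0 => /eqP ->.
case: (classic (exists C, P C /\ #|C| < #|A|)) => [[C [PC HC]]|H].
  by apply: (IH C) => //; rewrite -ltnS (leq_trans HC HA).
exists A; split => // C PC; rewrite leqNgt; apply/negP => HC; apply: H; by exists C.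
Qed.

Definition sp (e : rel T) (S A : {set T}) (b : bool) : Prop :=
  [/\ A \subset S, A != set0, A != S &
   forall a c, a \in A -> c \in S :\: A -> e a c = b].

Definition splits e S := exists A b, sp e S A b.

Definition P4 (e : rel T) (S : {set T}) : Prop :=
  exists a b c d, [/\ a \in S, b \in S, c \in S & d \in S] /\
   [/\ e a b, e b c & e c d] /\ [/\ ~~ e a c, ~~ e b d & ~~ e a d].

Definition compl (e : rel T) : rel T := fun x y => (x != y) && ~~ e x y.

Lemma P4_compl e : symmetric e -> forall S, P4 (compl e) S -> P4 e S.
Proof.
move=> esym S [a [b [c [d [[Ha Hb Hc Hd] [[Hab Hbc Hcd] [Hac Hbd Had]]]]]]].
have csym : symmetric (compl e) by move=> x y; rewrite /compl eq_sym esym.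
have Eac : e a c.
  move: Hac; rewrite /compl negb_and !negbK => /orP [/eqP Eac|//].
  by move: Had; rewrite Eac Hcd.
have Ebd : e b d.
  move: Hbd; rewrite /compl negb_and !negbK => /orP [/eqP Ebd|//].
  by move: Had; rewrite -Ebd Hab.
have Ead : e a d.
  move: (Had); rewrite /compl negb_and !negbK => /orP [/eqP Ead|//].
  by move: Hac; rewrite csym Ead Hcd.
exists c, a, d, b; split; first by split.
split; split => //; first by rewrite esym.
- by rewrite esym.
- by case/andP: Hcd.
- by case/andP: Hab.
- by case/andP: Hbc; rewrite esym.
Qed.

Lemma sp_compl e S A b : sp e S A b -> sp (compl e) S A (~~ b).
Proof.
case=> H1 H2 H3 H4; split => // a c aA cSA.
have ac : a != c by apply: contraTneq cSA => <-; rewrite inE aA.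
by rewrite /compl ac (H4 a c).
Qed.

Lemma sp_compl2 e S A b : sp (compl e) S A b -> sp e S A (~~ b).
Proof.
case=> H1 H2 H3 H4; split => // a c aA cSA.
have ac : a != c by apply: contraTneq cSA => <-; rewrite inE aA.
by move: (H4 a c aA cSA); rewrite /compl ac /= => <-; rewrite negbK.
Qed.

Lemma P4_sub e (S S' : {set T}) : S' \subset S -> P4 e S' -> P4 e S.
Proof.
move/subsetP=> sub [a [b [c [d [[Ha Hb Hc Hd] H]]]]].
by exists a, b, c, d; split => //; split; apply: sub.
Qed.

Lemma step e (esym : symmetric e) (S : {set T}) v (A : {set T}) :
  v \in S -> sp e (S :\ v) A false -> ~ P4 e S -> splits e S.
Proof.
move=> vS [AS A0 AS' HA] nP4.
set S' := S :\ v.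
have S'S : S' \subset S by apply: subsetDl.
have vS' : v \notin S' by rewrite !inE eqxx.
have S'0 : S' != set0.
  case/set0Pn: A0 => a aA; apply/set0Pn; exists a; exact: (subsetP AS).
case: (boolP [forall y in S', e v y]) => [/forall_inP Hall | /forall_inPn [x xS' nvx]].
  exists [set v], true; split.
  - by rewrite sub1set.
  - by apply/set0Pn; exists v; rewrite set11.
  - apply/eqP => E; move: S'0; by rewrite /S' -E setDv eqxx.
  - by move=> a c; rewrite inE => /eqP ->; apply: Hall.
pose P (B : {set T}) := [/\ x \in B, B \subset S', B != S' &
   forall a c, a \in B -> c \in S' :\: B -> ~~ e a c].
have P0 : exists B, P B.
  case: (boolP (x \in A)) => xA.
    exists A; split => // a c aA cA; by rewrite (HA a c).
  exists (S' :\: A); split.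
  - by rewrite inE xA.
  - exact: subsetDl.
  - case/set0Pn: A0 => a aA; apply/eqP => E.
    have aS' : a \in S' := subsetP AS a aA.
    by move: aS'; rewrite -E inE aA.
  - move=> a c /setDP [aS' aA] /setDP [cS' cnot].
    have cA : c \in A by move: cnot; rewrite inE cS' andbT negbK.
    by rewrite esym (HA c a) // inE aA.
case: P0 => B0 /ex_min_card [B [[xB BS' BS'n HB] Bmin]].
have BS : B \subset S by apply: subset_trans S'S.
have vB : v \notin B by apply: contra vS'; apply: (subsetP BS').
case: (set_0Vmem [set y in B | e v y]) => [Bn0 | [y]].
  exists B, false; split => //.
  - by apply/set0Pn; exists x.
  - by apply: contraNneq vB => ->.
  - move=> a c aB; rewrite inE => /andP [cB cS].
    case: (eqVneq c v) => [->|cv].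
      rewrite esym; apply/negbTE; apply/negP => eva.
      have : a \in [set y in B | e v y] by rewrite inE aB eva.
      by rewrite Bn0 inE.
    apply/negbTE; apply: HB => //; by rewrite !inE cB cv.
rewrite inE => /andP [yB evy].
have [y' [x' [y'B evy' x'B nvx' ey'x']]] :
  exists y' x', [/\ y' \in B, e v y', x' \in B, ~~ e v x' & e y' x'].
  apply: NNPP => H.
  pose Bx := [set z in B | ~~ e v z].
  have BxB : Bx \subset B by apply/subsetP => z; rewrite inE => /andP [].
  have PBx : P Bx.
    split.
    - by rewrite inE xB.
    - exact: subset_trans BS'.
    - apply/eqP => E; have : y \in Bx by rewrite E (subsetP BS').
      by rewrite inE evy andbF.
    - move=> a c; rewrite inE => /andP [aB nva] /setDP [cS' cnBx].
      case: (boolP (c \in B)) => cB; last by apply: HB => //; apply/setDP.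
      move: cnBx; rewrite inE cB /= negbK => evc.
      apply/negP => eac; apply: H; exists c, a; split => //; by rewrite esym.
  have := Bmin _ PBx.
  have : Bx \proper B.
    apply/properP; split => //; exists y => //; by rewrite inE evy andbF.
  move/proper_card; by rewrite ltnNge => /negbTE ->.
case: (boolP [exists z in S' :\: B, e v z]) => [/exists_inP [z zC evz] | /exists_inPn Hnz].
  exfalso; apply: nP4; exists x', y', v, z; split.
    have zS' : z \in S' by case/setDP: zC.
    split => //; [exact: (subsetP BS) | exact: (subsetP BS) | exact: (subsetP S'S)].
  split; split => //.
  - by rewrite esym.
  - by rewrite esym.
  - by rewrite esym.
  - by apply: HB.
  - by apply: HB.
exists (S' :\: B), false; split.
- exact: subset_trans (subsetDl _ _) S'S.
- have : B \proper S' by rewrite properEneq BS'n BS'.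
  case/properP => _ [z zS' zB]; apply/set0Pn; exists z; by rewrite inE zB.
- apply/eqP => E; by move: vS; rewrite -E inE (negbTE vS') andbF.
- move=> a c aC; rewrite inE => /andP [cC cS].
  case: (eqVneq c v) => [->|cv].
    by rewrite esym; apply/negbTE; apply: Hnz.
  have cS' : c \in S' by apply/setD1P.
  have cB : c \in B by apply: contraR cC => cB; apply/setDP.
  by rewrite esym; apply/negbTE; apply: HB.
Qed.

Lemma seinsche_n e : symmetric e -> irreflexive e ->
  forall n (S : {set T}), #|S| = n.+2 -> ~ P4 e S -> splits e S.
Proof.
move=> esym eirr n; elim: n => [|n IH] S HS nP4.
  have /cards2P [x [y [xy ->]]] : #|S| == 2 by rewrite HS.
  exists [set x], (e x y); split.
  - by rewrite sub1set !inE eqxx.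
  - by apply/set0Pn; exists x; rewrite set11.
  - apply/eqP => E; have : y \in [set x] by rewrite E !inE eqxx orbT.
    by rewrite inE eq_sym (negbTE xy).
  - move=> a c; rewrite inE => /eqP ->; rewrite !inE => /andP [cx].
    by rewrite (negbTE cx) /= => /eqP ->.
have [v vS] : exists v, v \in S.
  by apply/set0Pn; rewrite -card_gt0 HS.
have HS' : #|S :\ v| = n.+2.
  by move: HS; rewrite (cardsD1 v S) vS add1n => -[].
have nP4' : ~ P4 e (S :\ v) by move=> H; apply: nP4; apply: P4_sub H; apply: subsetDl.
have [A [b spA]] := IH _ HS' nP4'.
case: b spA => spA; last exact: step spA nP4.
have csym : symmetric (compl e) by move=> x y; rewrite /compl eq_sym esym.
have := step csym vS (sp_compl spA) (fun H => nP4 (P4_compl esym H)).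
by case=> A' [b' /sp_compl2 H]; exists A', (~~ b').
Qed.

Lemma border (e : rel T) (N : {set T}) x y :
  connect e x y -> x \in N -> y \notin N -> exists p q, [/\ p \in N, q \notin N & e p q].
Proof.
case/connectP => s; elim: s x => [|z s IH] x /=.
  by move=> _ -> ->.
case/andP => exz pzs Ey xN yN.
case: (boolP (z \in N)) => zN; first exact: IH pzs Ey zN yN.
by exists x, z.
Qed.

End Aux.

Lemma restrict_mod (T : finType) (e : rel T) (N A : {set T}) w :
  A \subset N ->
  [forall x in N, e w x] || [forall x in N, ~~ e w x] ->
  [forall x in A, e w x] || [forall x in A, ~~ e w x].
Proof.
move/subsetP=> sub /orP [/forall_inP H|/forall_inP H]; apply/orP.
  by left; apply/forall_inP => x /sub; apply: H.
by right; apply/forall_inP => x /sub; apply: H.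
Qed.

Lemma sp_module (T : finType) (e : rel T) (N A : {set T}) b :
  symmetric e -> is_module e N -> sp e N A b -> is_module e A /\ is_module e (N :\: A).
Proof.
move=> esym modN [AN A0 AN' HA]; split => w wA.
  case: (boolP (w \in N)) => wN; last exact: restrict_mod AN (modN w wN).
  have wNA : w \in N :\: A by apply/setDP.
  case: b HA => HA; apply/orP; [left|right]; apply/forall_inP => x xA;
    by rewrite esym HA.
case: (boolP (w \in N)) => wN; last exact: restrict_mod (subsetDl _ _) (modN w wN).
have wA' : w \in A by apply: contraR wA => H; apply/setDP.
case: b HA => HA; apply/orP; [left|right]; apply/forall_inP => x xA;
  by rewrite HA.
Qed.

Theorem lemma5 (T : finType) (e : rel T) (e_sym : symmetric e)
    (e_irr : irreflexive e) (hT : #|T| != 2) :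
  connected_graph e -> distance_hereditary e ->
  (twin_free e <-> prime_graph e).
Proof.
move=> conn [_ [_ [_ nogem]]]; split; last first.
  move=> pr u v [uv Htw].
  have M0 : [set u; v] != set0 by apply/set0Pn; exists u; rewrite !inE eqxx.
  have modM : is_module e [set u; v].
    move=> w; rewrite !inE negb_or => /andP [wu wv].
    have := Htw w wu wv; rewrite (e_sym u) (e_sym v) => E.
    case: (boolP (e w u)) => ewu; apply/orP; [left|right]; apply/forall_inP => x;
      rewrite !inE => /orP [] /eqP ->; by rewrite -?E ?ewu.
  case: (pr _ M0 modM) => [H|H].
    by move: H; rewrite cards2 uv.
  by move: hT; rewrite -cardsT -H cards2 uv.
move=> tf M M0 modM.
case: (classic (trivial_module M)) => // ntriv; exfalso.
pose P (N : {set T}) := [/\ 2 <= #|N|, N != setT & is_module e N].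
have PM : P M.
  split => //.
  - rewrite ltn_neqAle card_gt0 M0 andbT; apply/eqP => H; apply: ntriv; by left.
  - by apply/eqP => H; apply: ntriv; right.
have [N [[N2 NT modN] Nmin]] := ex_min_card PM.
case: (ltngtP #|N| 2) => [|N3|N2'].
- by rewrite ltnNge N2.
- case: (classic (P4 e N)) => [hP4 | nP4]; last first.
    have HS : #|N| = (#|N| - 2).+2 by rewrite -addn2 subnK.
    have [A [b spA]] := seinsche_n e_sym e_irr HS nP4.
    have [modA modA'] := sp_module e_sym modN spA.
    case: spA => AN A0 AN' _.
    have PT (C : {set T}) : C \subset N -> C != setT.
      by move=> CN; apply: contraNneq NT => E; rewrite -subTset -E.
    have prA : A \proper N by rewrite properEneq AN' AN.
    have prA' : N :\: A \proper N.
      rewrite properEneq subsetDl andbT; apply/eqP => E.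
      case/set0Pn: A0 => a aA.
      have : a \in N :\: A by rewrite E (subsetP AN).
      by rewrite inE aA.
    have cA : #|A| <= 1.
      rewrite leqNgt; apply/negP => H.
      have := Nmin A (And3 H (PT _ AN) modA).
      by rewrite leqNgt (proper_card prA).
    have cA' : #|N :\: A| <= 1.
      rewrite leqNgt; apply/negP => H.
      have := Nmin _ (And3 H (PT _ (subsetDl _ _)) modA').
      by rewrite leqNgt (proper_card prA').
    have : #|N :&: A| + #|N :\: A| = #|N| by apply: cardsID.
    rewrite (setIidPr AN) => E.
    by move: N3; rewrite -E; apply/negP; rewrite -leqNgt (leq_add cA cA').
  case: hP4 => [a [b [c [d [[Ha Hb Hc Hd] [[eab ebc ecd] [nac nbd nad]]]]]]].
  have [w wN] : exists w, w \notin N.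
    apply: NNPP => H; apply: (negP NT); rewrite -subTset; apply/subsetP => x _.
    by apply: NNPP => xN; apply: H; exists x; apply/negP.
  have [p [q [pN qN epq]]] := border (conn a w) Ha wN.
  have Hq : forall x, x \in N -> e q x.
    move=> x xN; case/orP: (modN q qN) => /forall_inP H; first exact: H.
    by have := H p pN; rewrite e_sym epq.
  apply: nogem.
  pose f (i : 'I_5) := nth q [:: a; b; c; d; q] i.
  have eqa := Hq a Ha. have eqb := Hq b Hb. have eqc := Hq c Hc. have eqd := Hq d Hd.
  have eaq : e a q by rewrite e_sym.
  have ebq : e b q by rewrite e_sym.
  have ecq : e c q by rewrite e_sym.
  have edq : e d q by rewrite e_sym.
  have eba : e b a by rewrite e_sym.
  have ecb : e c b by rewrite e_sym.
  have edc : e d c by rewrite e_sym.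
  have nca : e c a = false by rewrite e_sym; apply/negbTE.
  have ndb : e d b = false by rewrite e_sym; apply/negbTE.
  have nda : e d a = false by rewrite e_sym; apply/negbTE.
  have nac' : e a c = false by apply/negbTE.
  have nbd' : e b d = false by apply/negbTE.
  have nad' : e a d = false by apply/negbTE.
  have iaa := e_irr a. have ibb := e_irr b. have icc := e_irr c.
  have idd := e_irr d. have iqq := e_irr q.
  have fE : forall i j, e (f i) (f j) = gem_rel i j.
    move=> [[|[|[|[|[|i]]]]] Hi] [[|[|[|[|[|j]]]]] Hj] //=;
      by rewrite /gem_rel /is_pair /= ?eab ?ebc ?ecd ?eqa ?eqb ?eqc ?eqd ?eaq ?ebq ?ecq ?edq
        ?eba ?ecb ?edc ?nca ?ndb ?nda ?nac' ?nbd' ?nad' ?iaa ?ibb ?icc ?idd ?iqq.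
  exists f; split => //.
  move=> i j Hf.
  have H : forall k, gem_rel i k = gem_rel j k by move=> k; rewrite -!fE Hf.
  move: i j H {Hf} => [[|[|[|[|[|i]]]]] Hi] [[|[|[|[|[|j]]]]] Hj] //= H; 
    try (by apply: val_inj);
    first [ by have := H (Ordinal (isT : 0 < 5)) | by have := H (Ordinal (isT : 1 < 5))
          | by have := H (Ordinal (isT : 2 < 5)) | by have := H (Ordinal (isT : 3 < 5))
          | by have := H (Ordinal (isT : 4 < 5)) ].
- have /cards2P [u [v [uv E]]] : #|N| == 2 by rewrite N2'.
  apply: (tf u v); split => // w wu wv.
  have wN : w \notin N by rewrite E !inE negb_or wu wv.
  rewrite (e_sym u) (e_sym v).
  case/orP: (modN w wN) => /forall_inP H.
    by rewrite !H // E !inE eqxx ?orbT.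
  by rewrite !(negbTE (H _ _)) // E !inE eqxx ?orbT.
Qed.
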